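(* Let $K\subseteq\mathbb{R}^n$ be a proper cone and let $A\in\mathbb{R}^{n\times n}$ be $K$-monotone. Let $A=U-V$ be a $K$-regular splitting and let $U=F-G$ be a $K$-weak regular splitting of type II such that $VF^{-1}G=GF^{-1}V$. Fix a positive integer $s$, let $P_s$ be the matrix with $P_s^{-1}=\sum_{j=0}^{s-1}(F^{-1}G)^{j}F^{-1}$, and let $\widehat{T}_{s}=(GF^{-1})^{s}+\sum_{j=0}^{s-1}(GF^{-1})^{j}VF^{-1}$. If $G\geq_K GF^{-1}G$, then the induced splitting $A=P_s-\widehat{T}_sP_s$ is a $K$-regular splitting.
   Context: A proper cone $K\subseteq\mathbb{R}^n$ is a closed, convex, pointed, solid cone. For $M\in\mathbb{R}^{n\times n}$, $M\geq_K 0$ means $MK\subseteq K$, and $M\geq_K N$ means $M-N\geq_K0$. A matrix $A$ is $K$-monotone if $A$ is nonsingular and $A^{-1}\geq_K 0$. A splitting $A=U-V$ (with $U$ nonsingular) is $K$-regular if $U^{-1}\geq_K 0$ and $V\geq_K 0$; it is a $K$-weak regular splitting of type II if $U^{-1}\geq_K 0$ and $VU^{-1}\geq_K 0$. *)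

(* Defs.v *)
From HB Require Import structures.
From mathcomp Require Import all_boot all_order all_algebra.
From mathcomp Require Import all_classical all_reals all_analysis.
Set Implicit Arguments. Unset Strict Implicit. Unset Printing Implicit Defensive.
Import Order.TTheory GRing.Theory Num.Theory.
Import numFieldNormedType.Exports.
Local Open Scope classical_set_scope.
Local Open Scope ring_scope.

Definition is_cone (R : realType) (n : nat) (K : set 'cV[R]_n) : Prop :=
  forall (a : R) (x : 'cV[R]_n), 0 <= a -> K x -> K (a *: x).

Definition is_convex_set (R : realType) (n : nat) (K : set 'cV[R]_n) : Prop :=
  forall (t : R) (x y : 'cV[R]_n), 0 <= t <= 1 -> K x -> K y ->
    K (t *: x + (1 - t) *: y).

Definition is_pointed (R : realType) (n : nat) (K : set 'cV[R]_n) : Prop :=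
  forall x : 'cV[R]_n, K x -> K (- x) -> x = 0.

Definition is_solid (R : realType) (n : nat) (K : set 'cV[R]_n) : Prop :=
  (interior K) !=set0.

Definition proper_cone (R : realType) (n : nat) (K : set 'cV[R]_n) : Prop :=
  [/\ is_cone K, closed K, is_convex_set K, is_pointed K & is_solid K].

Definition Knonneg (R : realType) (n : nat) (K : set 'cV[R]_n) (M : 'M[R]_n) : Prop :=
  forall x : 'cV[R]_n, K x -> K (M *m x).

Definition Kge (R : realType) (n : nat) (K : set 'cV[R]_n) (M N : 'M[R]_n) : Prop :=
  Knonneg K (M - N).

Definition K_monotone (R : realType) (n : nat) (K : set 'cV[R]_n) (A : 'M[R]_n) : Prop :=
  A \in unitmx /\ Knonneg K (invmx A).

Definition K_regular_splitting (R : realType) (n : nat) (K : set 'cV[R]_n)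
  (A U V : 'M[R]_n) : Prop :=
  [/\ A = U - V, U \in unitmx, Knonneg K (invmx U) & Knonneg K V].

Definition K_weak_regular_splitting_II (R : realType) (n : nat) (K : set 'cV[R]_n)
  (A U V : 'M[R]_n) : Prop :=
  [/\ A = U - V, U \in unitmx, Knonneg K (invmx U) & Knonneg K (V *m invmx U)].

Definition Ps_inv (R : realType) (n : nat) (F G : 'M[R]_n) (s : nat) : 'M[R]_n :=
  \sum_(j < s) (iter j (mulmx (invmx F *m G)) 1%:M) *m invmx F.

Definition Ps (R : realType) (n : nat) (F G : 'M[R]_n) (s : nat) : 'M[R]_n :=
  invmx (Ps_inv F G s).

Definition That (R : realType) (n : nat) (F G V : 'M[R]_n) (s : nat) : 'M[R]_n :=
  iter s (mulmx (G *m invmx F)) 1%:M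
  + \sum_(j < s) (iter j (mulmx (G *m invmx F)) 1%:M) *m V *m invmx F.

(* Main.v *)
Require Import Defs.
From HB Require Import structures.
From mathcomp Require Import all_boot all_order all_algebra.
From mathcomp Require Import all_classical all_reals all_analysis.
From mathcomp Require Import ring lra.
Set Implicit Arguments. Unset Strict Implicit. Unset Printing Implicit Defensive.
Import Order.TTheory GRing.Theory Num.Theory.
Import numFieldNormedType.Exports.
Local Open Scope classical_set_scope.
Local Open Scope ring_scope.

Definition pw (R : realType) n (X : 'M[R]_n) (N : nat) : 'M[R]_n :=
  iter N (mulmx X) 1%:M.

Lemma pwS (R : realType) n (X : 'M[R]_n) N : pw X N.+1 = X *m pw X N.
Proof. by []. Qed.

Lemma pw0 (R : realType) n (X : 'M[R]_n) : pw X 0 = 1%:M.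
Proof. by []. Qed.

Lemma pw_inter (R : realType) n (X Y Z : 'M[R]_n) N :
  X *m Z = Z *m Y -> pw X N *m Z = Z *m pw Y N.
Proof.
move=> h; elim: N => [|N IH]; first by rewrite pw0 mul1mx mulmx1.
by rewrite !pwS -mulmxA IH !mulmxA h.
Qed.

Lemma pwSr (R : realType) n (X : 'M[R]_n) N : pw X N.+1 = pw X N *m X.
Proof. by rewrite pwS (pw_inter N (erefl (X *m X))). Qed.

Lemma pwD (R : realType) n (X : 'M[R]_n) a b : pw X (a + b) = pw X a *m pw X b.
Proof.
elim: a => [|a IH]; first by rewrite add0n pw0 mul1mx.
by rewrite addSn !pwS IH mulmxA.
Qed.

Lemma pwM (R : realType) n (X : 'M[R]_n) m s : pw X (m * s) = pw (pw X s) m.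
Proof.
elim: m => [|m IH]; first by rewrite mul0n.
by rewrite mulSn pwD IH pwS.
Qed.

Lemma Kn_mul (R : realType) n (K : set 'cV[R]_n) A B :
  Knonneg K A -> Knonneg K B -> Knonneg K (A *m B).
Proof. by move=> hA hB x Kx; rewrite -mulmxA; apply/hA/hB. Qed.

Lemma Kn_1 (R : realType) n (K : set 'cV[R]_n) : Knonneg K 1%:M.
Proof. by move=> x Kx; rewrite mul1mx. Qed.

Lemma Kn_pw (R : realType) n (K : set 'cV[R]_n) X N :
  Knonneg K X -> Knonneg K (pw X N).
Proof.
move=> hX; elim: N => [|N IH]; first exact: Kn_1.
by rewrite pwS; apply: Kn_mul.
Qed.
Lemma Kscale (R : realType) n (K : set 'cV[R]_n) a x :
  proper_cone K -> 0 <= a -> K x -> K (a *: x).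
Proof. by case=> c _ _ _ _; apply: c. Qed.

Lemma Knonempty (R : realType) n (K : set 'cV[R]_n) :
  proper_cone K -> exists x, K x.
Proof.
case=> _ _ _ _ [x /interior_subset Kx]; by exists x.
Qed.

Lemma K0 (R : realType) n (K : set 'cV[R]_n) : proper_cone K -> K 0.
Proof.
move=> pK; have [x Kx] := Knonempty pK.
by rewrite -(scale0r x); apply: Kscale.
Qed.

Lemma Kadd (R : realType) n (K : set 'cV[R]_n) x y :
  proper_cone K -> K x -> K y -> K (x + y).
Proof.
move=> pK Kx Ky; case: (pK) => _ _ cv _ _.
have h : K ((2^-1 : R) *: x + (1 - 2^-1) *: y).
  apply: cv => //; apply/andP; split; first by rewrite invr_ge0.
  by rewrite invf_le1 // ler1n.
have -> : x + y = 2 *: ((2^-1 : R) *: x + (1 - 2^-1) *: y).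
  have e : (1 - 2^-1 : R) = 2^-1 by field.
  by rewrite e -scalerDr scalerA divff ?pnatr_eq0 // scale1r.
by apply: Kscale.
Qed.

Lemma Kn_0 (R : realType) n (K : set 'cV[R]_n) : proper_cone K -> Knonneg K 0.
Proof. by move=> pK x _; rewrite mul0mx; apply: K0. Qed.

Lemma Kn_add (R : realType) n (K : set 'cV[R]_n) A B : proper_cone K ->
  Knonneg K A -> Knonneg K B -> Knonneg K (A + B).
Proof. by move=> pK hA hB x Kx; rewrite mulmxDl; apply: Kadd => //; [apply: hA|apply: hB]. Qed.

Lemma Kn_sum (R : realType) n (K : set 'cV[R]_n) s (f : 'I_s -> 'M[R]_n) :
  proper_cone K -> (forall j, Knonneg K (f j)) -> Knonneg K (\sum_(j < s) f j).
Proof.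
move=> pK h; apply: (big_ind (Knonneg K)); first exact: Kn_0.
  by move=> A B; apply: Kn_add.
by move=> j _; apply: h.
Qed.

Lemma Ksub (R : realType) n (K : set 'cV[R]_n) x y z :
  proper_cone K -> K (x - y) -> K (y - z) -> K (x - z).
Proof.
move=> pK h1 h2; have := Kadd pK h1 h2.
by rewrite addrA subrK.
Qed.

Lemma order_unit (R : realType) n (K : set 'cV[R]_n) (e : 'cV[R]_n) (rho : R) :
  proper_cone K -> 0 < rho -> (forall y, `|e - y| < rho -> K y) ->
  forall v, exists c, 0 < c /\ K (c *: e - v).
Proof.
move=> pK r0 hb v.
pose c := (2 * `|v| + 1) / rho.
have c0 : 0 < c by apply: divr_gt0 => //; apply: ltr_pwDr => //; apply: mulr_ge0.
exists c; split => //.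
have -> : c *: e - v = c *: (e - c^-1 *: v).
  by rewrite scalerBr scalerA divff ?gt_eqF // scale1r.
apply: Kscale => //; first exact: ltW.
apply: hb; rewrite opprB addrC subrK normrZ gtr0_norm ?invr_gt0 //.
rewrite /c invf_div.
have h1 : 0 < 2 * `|v| + 1 by apply: ltr_pwDr => //; apply: mulr_ge0.
rewrite mulrAC ltr_pdivrMr // ltr_pM2l //; lra.
Qed.

Lemma closed_approx (R : realType) n (K : set 'cV[R]_n) y : closed K ->
  (forall eps : R, 0 < eps -> exists z, K z /\ `|y - z| < eps) -> K y.
Proof.
move=> cK h; apply: contrapT => nKy.
have := closed_openC cK; rewrite openE => /(_ y nKy).
rewrite /interior => /nbhs_ballP [r r0 hr].
have [z [Kz yz]] := h r r0.
by apply: (hr z) => //; rewrite -ball_normE /ball_ /=.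
Qed.
Lemma entry_le (R : realType) m n (z : 'M[R]_(m, n)) i j : `|z i j| <= `|z|.
Proof.
rewrite [leRHS]/Num.Def.normr /= mx_normrE.
by apply: (le_bigmax _ (fun ij : 'I_m * 'I_n => `|z ij.1 ij.2|) (i, j)).
Qed.

Lemma norm_le (R : realType) m n (z : 'M[R]_(m, n)) c :
  0 <= c -> (forall i j, `|z i j| <= c) -> `|z| <= c.
Proof.
move=> c0 h; rewrite [leLHS]/Num.Def.normr /= mx_normrE.
by apply/bigmax_leP; split => // -[i j] _; apply: h.
Qed.

Lemma mul_norm_le (R : realType) m n p (M : 'M[R]_(m, n)) (z : 'M[R]_(n, p)) :
  `|M *m z| <= (\sum_i \sum_j `|M i j|) * `|z|.
Proof.
apply: norm_le => [|i k].
  by apply: mulr_ge0 => //; apply: sumr_ge0 => i _; apply: sumr_ge0.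
rewrite mxE; apply: (le_trans (ler_norm_sum _ _ _)).
apply: (@le_trans _ _ ((\sum_j `|M i j|) * `|z|)).
  rewrite mulr_suml; apply: ler_sum => j _; rewrite normrM.
  by apply: ler_wpM2l => //; apply: entry_le.
apply: ler_wpM2r => //.
by rewrite (bigD1 i) //= lerDl; apply: sumr_ge0 => i' _; apply: sumr_ge0.
Qed.

Lemma norm_trmx (R : realType) m n (z : 'M[R]_(m, n)) : `|z^T| = `|z|.
Proof.
apply/eqP; rewrite eq_le; apply/andP; split; apply: norm_le => // i j;
  rewrite ?mxE; first exact: entry_le.
by have := entry_le z^T j i; rewrite mxE.
Qed.

Lemma lip_cont (R : realType) a b c d (f : 'M[R]_(a, b) -> 'M[R]_(c, d)) :
  (forall x y, `|f x - f y| <= `|x - y|) -> continuous f.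
Proof.
move=> h x A /nbhs_ballP [e e0 he]; apply/nbhs_ballP; exists e => // y xy.
apply: he; move: xy; rewrite -!ball_normE /ball_ /=; exact: le_lt_trans.
Qed.

Lemma sphere_compact (R : realType) n :
  compact [set y : 'cV[R]_n | `|y| = 1].
Proof.
pose Sr := [set r : 'rV[R]_n | `|r| = 1].
have cSr : compact Sr.
  apply: bounded_closed_compact.
    exists 1; split; first by rewrite num_real.
    by move=> M M1 x /= ->; apply: ltW.
  have -> : Sr = (fun r : 'rV[R]_n => `|r|) @^-1` [set x : R | x = 1] by [].
  apply: preimage_closed; last exact: closed_eq.
  by move=> x _; apply: norm_continuous.
have tc : continuous (fun r : 'rV[R]_n => r^T).
  by apply: lip_cont => x y; rewrite -linearB /= norm_trmx.
have -> : [set y : 'cV[R]_n | `|y| = 1] = (fun r : 'rV[R]_n => r^T) @` Sr.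
  apply/seteqP; split => y /=.
    by move=> y1; exists y^T; rewrite /Sr /= ?trmxK // norm_trmx.
  by case=> r /= r1 <-; rewrite norm_trmx.
exact: (continuous_compact (@continuous_subspaceT _ _ Sr _ tc) cSr).
Qed.

Lemma fold_min (R : realType) (s : seq R) : (forall x, x \in s -> 0 < x) ->
  0 < foldr Num.min 1 s /\ forall x, x \in s -> foldr Num.min 1 s <= x.
Proof.
elim: s => [|a s IH] h /=; first by split.
have [h1 h2] : 0 < foldr Num.min 1 s /\ forall x, x \in s -> foldr Num.min 1 s <= x.
  by apply: IH => x xs; apply: h; rewrite inE xs orbT.
split; first by rewrite lt_min h1 andbT h // inE eqxx.
move=> x; rewrite inE => /orP [/eqP ->|xs]; first by rewrite ge_min lexx.
by rewrite ge_min h2 // orbT.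
Qed.

Lemma normality (R : realType) n (K : set 'cV[R]_n) (e : 'cV[R]_n) :
  proper_cone K -> K e ->
  exists eta : R, 0 < eta /\
    forall y, `|y| = 1 -> ~ (K (eta *: e + y) /\ K (eta *: e - y)).
Proof.
move=> pK Ke; case: (pK) => _ cK _ pt _.
pose f := fun eta : R => ~` [set y | K (eta *: e + y) /\ K (eta *: e - y)].
have cS : cover_compact [set y : 'cV[R]_n | `|y| = 1].
  by rewrite -compact_cover; exact: sphere_compact.
have := cS R [set eta | 0 < eta] f.
case.
- move=> eta _; rewrite /f openC.
  have -> : [set y | K (eta *: e + y) /\ K (eta *: e - y)] =
    (fun y => eta *: e + y) @^-1` K `&` (fun y => eta *: e - y) @^-1` K by [].
  apply: closedI; (apply: preimage_closed => // x _; apply: lip_cont => {}x y).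
    by rewrite opprD addrACA subrr add0r.
  by rewrite opprD addrACA subrr add0r opprK addrC distrC.
- move=> y /= y1; apply: contrapT => hn.
  have H : forall eta, 0 < eta -> K (eta *: e + y) /\ K (eta *: e - y).
    move=> eta e0; apply: contrapT => nh; apply: hn; by exists eta.
  have appr : forall sg : R, (sg = 1 \/ sg = -1) -> K (sg *: y).
    move=> sg hsg; apply: closed_approx => // eps eps0.
    pose c := eps / (`|e| + 1).
    have he : 0 < `|e| + 1 by apply: ltr_pwDr.
    have c0 : 0 < c by apply: divr_gt0.
    have [H1 H2] := H c c0.
    case: hsg => ->.
      exists (c *: e + y); split => //.
      rewrite scale1r opprD addrCA subrr addr0 normrN normrZ gtr0_norm //.
      rewrite /c mulrAC ltr_pdivrMr // ltr_pM2l //; lra.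
    exists (c *: e - y); split => //.
    rewrite scaleN1r opprB addKr normrN normrZ gtr0_norm //.
    rewrite /c mulrAC ltr_pdivrMr // ltr_pM2l //; lra.
  have y0 := pt y (eq_ind _ K (appr 1 (or_introl erefl)) _ (scale1r y))
                 (eq_ind _ K (appr (-1) (or_intror erefl)) _ (scaleN1r y)).
  by move: y1; rewrite y0 normr0 => /esym/eqP; rewrite oner_eq0.
- move=> D' sD cov.
  have pos : forall x, x \in finmap.enum_fset D' -> 0 < x by move=> x /sD; rewrite inE.
  have [m0 mle] := fold_min pos.
  exists (foldr Num.min 1 (finmap.enum_fset D')); split => // y y1 [Hp Hm].
  have [eta /= etaD nK] := cov y y1.
  apply: nK; split.
    have -> : eta *: e + y = (eta - foldr Num.min 1 (finmap.enum_fset D')) *: e +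
      (foldr Num.min 1 (finmap.enum_fset D') *: e + y) by rewrite addrA -scalerDl subrK.
    apply: Kadd => //; apply: Kscale => //; rewrite subr_ge0; exact: mle.
  have -> : eta *: e - y = (eta - foldr Num.min 1 (finmap.enum_fset D')) *: e +
    (foldr Num.min 1 (finmap.enum_fset D') *: e - y) by rewrite addrA -scalerDl subrK.
  apply: Kadd => //; apply: Kscale => //; rewrite subr_ge0; exact: mle.
Qed.

Lemma norm_bound (R : realType) n (K : set 'cV[R]_n) (e : 'cV[R]_n) (eta : R) :
  proper_cone K -> K e -> 0 < eta ->
  (forall y, `|y| = 1 -> ~ (K (eta *: e + y) /\ K (eta *: e - y))) ->
  forall y (t : R), 0 <= t -> K (t *: e + y) -> K (t *: e - y) -> eta * `|y| <= t.
Proof.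
move=> pK Ke eta0 h y t t0 Kp Km.
have [->|yn0] := eqVneq y 0; first by rewrite normr0 mulr0.
have ny : 0 < `|y| by rewrite normr_gt0.
rewrite leNgt; apply/negP => lt.
have lt' : t / `|y| < eta by rewrite ltr_pdivrMr.
pose u := `|y|^-1 *: y.
have u1 : `|u| = 1 by rewrite normrZ normrV ?unitfE ?gt_eqF // normr_id mulVf ?gt_eqF.
apply: (h u u1); split.
  have -> : eta *: e + u = (eta - t / `|y|) *: e + `|y|^-1 *: (t *: e + y).
    by rewrite scalerDr scalerA addrA -scalerDl mulrC subrK.
  apply: Kadd => //; apply: Kscale => //; (rewrite ?subr_ge0 ?invr_ge0; exact: ltW).
have -> : eta *: e - u = (eta - t / `|y|) *: e + `|y|^-1 *: (t *: e - y).
  by rewrite scalerBr scalerA addrA -scalerDl mulrC subrK.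
apply: Kadd => //; apply: Kscale => //; (rewrite ?subr_ge0 ?invr_ge0; exact: ltW).
Qed.

Lemma geom_small (R : realType) (q d : R) : 0 <= q < 1 -> 0 < d ->
  exists m : nat, q ^+ m < d.
Proof.
move=> /andP[q0 q1] d0.
have qn : `|q| < 1 by rewrite ger0_norm.
have := @cvgr0_norm_lt _ _ _ \oo _ (fun m => q ^+ m) (cvg_expr qn) d d0.
move=> h; have [m /=] := filter_ex (h _); rewrite ger0_norm ?exprn_ge0 //.
by exists m.
Qed.

Lemma Ypos (R : realType) n (K : set 'cV[R]_n) (F G U Y Z : 'M[R]_n) s :
  proper_cone K -> F \in unitmx -> U \in unitmx -> U = F - G ->
  Knonneg K (invmx U) -> Knonneg K (invmx F) -> Knonneg K (invmx F *m G) ->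
  Knonneg K (G *m invmx F) -> (0 < s)%N -> Knonneg K Z ->
  Y = Z + pw (G *m invmx F) s *m Y -> Knonneg K Y.
Proof.
move=> pK Fu Uu UFG Uin Fin Wn Hn s0 Zn YZ.
set Fi := invmx F in Fin Wn Hn YZ *; set Ui := invmx U in Uin *.
set W := Fi *m G in Wn *; set H := G *m Fi in Hn YZ *.
case: (pK) => _ cK _ _ [e /= ie].
have [rho rho0 hb] := (nbhs_ballP e K).1 ie.
have hb' : forall y, `|e - y| < rho -> K y.
  by move=> y ey; apply: hb; rewrite -ball_normE /ball_ /=.
have Ke : K e by apply: hb'; rewrite subrr normr0.
have OU := order_unit pK rho0 hb'.
have [eta [eta0 heta]] := normality pK Ke.
have NB := norm_bound pK Ke eta0 heta.
have FFi : F *m Fi = 1%:M by rewrite mulmxV.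
have FiF : Fi *m F = 1%:M by rewrite mulVmx.
have UUi : U *m Ui = 1%:M by rewrite mulmxV.
have UiU : Ui *m U = 1%:M by rewrite mulVmx.
have WU : W *m Ui = Ui - Fi.
  rewrite /W; have -> : G = F - U by rewrite UFG opprB addrC subrK.
  by rewrite mulmxBr mulmxBl FiF mul1mx -mulmxA UUi mulmx1.
have HF : forall N, pw H N *m F = F *m pw W N.
  move=> N; apply: pw_inter.
  by rewrite /H /W -mulmxA FiF mulmx1 mulmxA FFi mul1mx.
pose f := Fi *m e.
have Kf : K f by apply: Fin.
have [c0 [c0pos hc0]] := OU (F *m (Ui *m e)).
pose c := c0 + 1.
have c1 : 1 <= c by rewrite /c lerDr ltW.
have cpos : 0 < c by apply: lt_le_trans c1.
have hc : K (c *: f - Ui *m e).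
  have -> : c *: f - Ui *m e = Fi *m (c0 *: e - F *m (Ui *m e)) + f.
    by rewrite mulmxBr -scalemxAr mulmxA FiF mul1mx /c scalerDl scale1r addrAC.
  by apply: Kadd => //; apply: Fin.
pose d N := pw W N *m (Ui *m e).
have dK : forall N, K (d N).
  by move=> N; apply: (Kn_pw _ Wn); apply: Uin.
have dstep : forall N, d N - d N.+1 = pw W N *m f.
  move=> N; rewrite /d pwSr -mulmxA (mulmxA W) WU mulmxBl -mulmxBr.
  by rewrite opprB addrC subrK.
pose lam := 1 - c^-1.
have lam0 : 0 <= lam by rewrite subr_ge0 invf_le1.
have lam1 : lam < 1 by rewrite /lam ltrBlDr ltrDl invr_gt0.
have dec : forall N, K (lam *: d N - d N.+1).
  move=> N.
  have h1 : K (c *: (d N - d N.+1) - d N).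
    by rewrite dstep /d scalemxAr -mulmxBr; apply: (Kn_pw _ Wn).
  have ci : 0 <= c^-1 by rewrite invr_ge0 ltW.
  have := Kscale pK ci h1.
  by rewrite scalerBr scalerA mulVf ?gt_eqF // scale1r /lam scalerBl scale1r addrAC.
have geo : forall N, K (lam ^+ N *: d 0 - d N).
  elim => [|N IH]; first by rewrite expr0 scale1r subrr; apply: K0.
  have -> : lam ^+ N.+1 *: d 0 - d N.+1 =
      lam *: (lam ^+ N *: d 0 - d N) + (lam *: d N - d N.+1).
    by rewrite scalerBr scalerA -exprS addrA subrK.
  by apply: Kadd => //; apply: Kscale.
have [b [b0 hbb]] := OU (Ui *m e).
have d0e : d 0 = Ui *m e by rewrite /d pw0 mul1mx.
have geo2 : forall N, K ((lam ^+ N * b) *: e - d N).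
  move=> N; have -> : (lam ^+ N * b) *: e - d N =
      lam ^+ N *: (b *: e - d 0) + (lam ^+ N *: d 0 - d N).
    by rewrite scalerBr scalerA addrA subrK.
  apply: Kadd => //; apply: Kscale => //; [exact: exprn_ge0 | by rewrite d0e].
have bound : forall v : 'cV[R]_n, exists a : R, (0 <= a) /\ 
    (forall N, eta * `|pw W N *m v| <= a * (lam ^+ N * b)).
  move=> v.
  have [a1 [a1p h1]] := OU (U *m v).
  have [a2 [a2p h2]] := OU (- (U *m v)).
  have a0 : 0 <= a1 + a2 by rewrite addr_ge0 ?ltW.
  exists (a1 + a2); split => // N.
  have Kp : K ((a1 + a2) *: (Ui *m e) - v).
    have -> : (a1 + a2) *: (Ui *m e) - v = Ui *m ((a1 *: e - U *m v) + a2 *: e).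
      rewrite mulmxDr mulmxBr -!scalemxAr mulmxA UiU mul1mx scalerDl.
      by rewrite addrAC.
    apply: Uin; apply: Kadd => //; apply: Kscale => //; exact: ltW.
  have Km : K ((a1 + a2) *: (Ui *m e) + v).
    have -> : (a1 + a2) *: (Ui *m e) + v = Ui *m ((a2 *: e - - (U *m v)) + a1 *: e).
      rewrite opprK mulmxDr mulmxDr -!scalemxAr mulmxA UiU mul1mx scalerDl.
      by rewrite [RHS]addrC addrA.
    apply: Uin; apply: Kadd => //; apply: Kscale => //; exact: ltW.
  apply: NB; first by apply: mulr_ge0 => //; apply: mulr_ge0 => //; [exact: exprn_ge0|exact: ltW].
    have -> : (a1 + a2) * (lam ^+ N * b) *: e + pw W N *m v =
      (a1 + a2) *: ((lam ^+ N * b) *: e - d N) + pw W N *m ((a1 + a2) *: (Ui *m e) + v).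
      rewrite mulmxDr -scalemxAr -/(d N) scalerBr scalerA addrA subrK //.
    by apply: Kadd; [ |apply: Kscale| apply: (Kn_pw _ Wn)].
  have -> : (a1 + a2) * (lam ^+ N * b) *: e - pw W N *m v =
    (a1 + a2) *: ((lam ^+ N * b) *: e - d N) + pw W N *m ((a1 + a2) *: (Ui *m e) - v).
    rewrite mulmxBr -scalemxAr -/(d N) scalerBr scalerA addrA subrK //.
  by apply: Kadd; [ |apply: Kscale| apply: (Kn_pw _ Wn)].
move=> x Kx; set w := Y *m x.
have Hsn : Knonneg K (pw H s) by apply: Kn_pw.
have Kz : forall m, K (w - pw (pw H s) m *m w).
  elim => [|m IH]; first by rewrite pw0 mul1mx subrr; apply: K0.
  have hw : w - pw H s *m w = Z *m x.
    by rewrite /w {1}YZ mulmxDl mulmxA addrK.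
  have -> : w - pw (pw H s) m.+1 *m w =
      (w - pw (pw H s) m *m w) + pw (pw H s) m *m (w - pw H s *m w).
    by rewrite pwSr -mulmxA mulmxBr addrA subrK.
  by apply: Kadd => //; rewrite hw; apply: (Kn_pw _ Hsn); apply: Zn.
have [a [a0 ha]] := bound (Fi *m w).
pose CF := \sum_i \sum_j `|F i j|.
have CF0 : 0 <= CF by apply: sumr_ge0 => i _; apply: sumr_ge0.
apply: closed_approx cK _ => eps eps0.
have hp : 0 < CF * a * b + 1.
  by apply: ltr_pwDr => //; apply: mulr_ge0; [apply: mulr_ge0|apply: ltW].
pose del := eps * eta / (CF * a * b + 1).
have del0 : 0 < del by apply: divr_gt0 => //; apply: mulr_gt0.
have lams : 0 <= lam ^+ s < 1.
  by rewrite exprn_ge0 //= exprn_ilt1 // -lt0n.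
have [m hm] := geom_small lams del0.
exists (w - pw (pw H s) m *m w); split => //.
rewrite opprB addrC subrK -pwM.
have -> : pw H (m * s) *m w = F *m (pw W (m * s) *m (Fi *m w)).
  by rewrite -{1}[w]mul1mx -FFi !mulmxA HF.
apply: le_lt_trans (mul_norm_le _ _) _.
have hy := ha (m * s)%N.
have e1 : lam ^+ (m * s) = lam ^+ s ^+ m by rewrite mulnC exprM.
rewrite e1 in hy.
set q := lam ^+ s ^+ m in hy hm.
have q0 : 0 <= q by rewrite exprn_ge0 // exprn_ge0.
have hy' : `|pw W (m * s) *m (Fi *m w)| <= a * (q * b) / eta.
  by rewrite ler_pdivlMr // mulrC; exact: hy.
apply: le_lt_trans (ler_wpM2l CF0 hy') _.
have key : CF * a * b * q < eps * eta.
  have : q * (CF * a * b + 1) < eps * eta by rewrite -ltr_pdivlMr.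
  have : 0 <= CF * a * b * q.
    by apply: mulr_ge0 => //; apply: mulr_ge0; [apply: mulr_ge0|apply: ltW].
  nra.
rewrite mulrA ltr_pdivrMr //.
by have -> : CF * (a * (q * b)) = CF * a * b * q by ring.
Qed.

Lemma telesc (R : realType) n (H : 'M[R]_n) k :
  (1%:M - H) *m (\sum_(j < k) pw H j) = 1%:M - pw H k.
Proof.
elim: k => [|k IH]; first by rewrite big_ord0 mulmx0 pw0 subrr.
rewrite big_ord_recr /= mulmxDr IH mulmxBl mul1mx.
by rewrite addrA subrK.
Qed.

Unset Implicit Arguments.
Theorem theorem3p7 (R : realType) (n : nat) (K : set 'cV[R]_n)
  (A U V F G : 'M[R]_n) (s : nat) :
  proper_cone K ->
  K_monotone K A ->
  K_regular_splitting K A U V ->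
  K_weak_regular_splitting_II K U F G ->
  V *m invmx F *m G = G *m invmx F *m V ->
  (0 < s)%N ->
  Ps_inv F G s \in unitmx ->
  Kge K G (G *m invmx F *m G) ->
  K_regular_splitting K A (Ps F G s) (That F G V s *m Ps F G s).
Proof.
move=> pK _ [AUV Uu Uin Vn] [UFG Fu Fin Hn] comm s0 Piu hG.
have FFi : F *m invmx F = 1%:M by rewrite mulmxV.
have FiF : invmx F *m F = 1%:M by rewrite mulVmx.
set Fi := invmx F in Fin Hn comm hG FFi FiF *.
set H := G *m Fi in Hn hG *.
pose S := \sum_(j < s) pw H j.
have WFi : (Fi *m G) *m Fi = Fi *m H by rewrite mulmxA.
have ePi : Ps_inv F G s = Fi *m S.
  have e : forall j : 'I_s, iter j (mulmx (invmx F *m G)) 1%:M *m invmx F = Fi *m pw H j.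
    by move=> j; exact: (pw_inter j WFi).
  by rewrite /Ps_inv (eq_bigr _ (fun j _ => e j)) -mulmx_sumr.
have eT : That F G V s = pw H s + S *m V *m Fi.
  by rewrite /That -!mulmx_suml.
set Pi := Ps_inv F G s in Piu ePi *.
have -> : Ps F G s = invmx Pi by [].
set P := invmx Pi.
have PiP : Pi *m P = 1%:M by rewrite mulmxV.
have SFPi : S = F *m Pi by rewrite ePi mulmxA FFi mul1mx.
have cH : H *m (V *m Fi) = (V *m Fi) *m H.
  by rewrite /H !mulmxA comm.
have cS : S *m (V *m Fi) = (V *m Fi) *m S.
  rewrite /S mulmx_suml mulmx_sumr; apply: eq_bigr => j _.
  exact: pw_inter.
have eTP : That F G V s *m P = pw H s *m P + V.
  rewrite eT mulmxDl; congr (_ + _).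
  rewrite -(mulmxA S) cS SFPi !mulmxA -(mulmxA _ Pi) PiP mulmx1.
  by rewrite -(mulmxA V) FiF mulmx1.
have HF : H *m F = G by rewrite /H -mulmxA FiF mulmx1.
have key : (1%:M - pw H s) *m P = F - G.
  rewrite -telesc -/S SFPi -!mulmxA PiP mulmx1.
  by rewrite mulmxBl mul1mx HF.
have Wn : Knonneg K (Fi *m G).
  have -> : Fi *m G = invmx U *m (G - G *m Fi *m G).
    rewrite -[LHS]mul1mx -(mulVmx Uu) -mulmxA; congr (_ *m _).
    by rewrite UFG mulmxA mulmxBl FFi mulmxBl mul1mx.
  exact: Kn_mul.
have Hsn := Kn_pw s Hn.
split.
- rewrite AUV UFG -key eTP mulmxBl mul1mx.
  by rewrite opprD addrA.
- by rewrite unitmx_inv.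
- rewrite invmxK ePi; apply: Kn_mul => //.
  by apply: Kn_sum => // j; apply: Kn_pw.
- rewrite eTP; apply: Kn_add => //.
  have [s' es] : exists s', s = s'.+1 by case: (s) s0 => // s' _; exists s'.
  apply: (@Ypos R n K F G U (pw H s *m P) (pw H s' *m (G - H *m G)) s) => //.
    by apply: Kn_mul => //; apply: Kn_pw.
  apply/eqP; rewrite -subr_eq; apply/eqP.
  change (pw H s *m P - pw H s *m (pw H s *m P) = pw H s' *m (G - H *m G)).
  rewrite -mulmxBr -{1}[P]mul1mx -mulmxBl key.
  by rewrite es pwSr -mulmxA mulmxBr HF.
Qed.
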